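(* Let $D\ge1$, let $Q_D$ be the $D$-dimensional hypercube on $X=\{0,1\}^D$ with adjacency matrix $A$. For $1\le i<j\le D$ the matrix $B_{ij}=\alpha^*_iA\alpha^*_j-\alpha^*_jA\alpha^*_i$ is antisymmetric and $A$-like.
   Context: $Q_D$ is the graph with vertex set $X=\{0,1\}^D$, two vertices adjacent iff they differ in exactly one coordinate. Matrices are real with rows and columns indexed by $X$. A matrix $B$ is $A$-like if $BA=AB$ and $B_{xy}=0$ for all $x,y\in X$ that are neither equal nor adjacent; it is antisymmetric if $B^t=-B$. For $1\le i\le D$, $\alpha^*_i$ is the diagonal matrix with $(x,x)$-entry $1$ if $x_i=0$ and $-1$ if $x_i=1$. *)

(* Defs.v *)
From mathcomp Require Import all_boot all_order all_algebra.
From mathcomp Require Import reals.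
Set Implicit Arguments. Unset Strict Implicit. Unset Printing Implicit Defensive.
Import GRing.Theory Num.Theory.
Local Open Scope ring_scope.

(* Vertex set X = {0,1}^D, coordinates indexed by 'I_D (coordinate i of the
   paper, 1 <= i <= D, is the ordinal i-1). false = 0, true = 1. *)
Definition cube (D : nat) := {ffun 'I_D -> bool}.

Definition cmat (R : Type) (D : nat) := cube D -> cube D -> R.

Definition cmul (R : realType) (D : nat) (M N : cmat R D) : cmat R D :=
  fun x y => \sum_(z : cube D) M x z * N z y.

Definition ctr (R : Type) (D : nat) (M : cmat R D) : cmat R D := fun x y => M y x.

Definition hdist (D : nat) (x y : cube D) : nat := #|[set i | x i != y i]|.

Definition adjacent (D : nat) (x y : cube D) : bool := hdist x y == 1%N.

Definition adjQ (R : realType) (D : nat) : cmat R D :=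
  fun x y => if adjacent x y then 1 else 0.

Definition alpha_star (R : realType) (D : nat) (i : 'I_D) : cmat R D :=
  fun x y => if x == y then (if x i then -1 else 1) else 0.

Definition A_like (R : realType) (D : nat) (B : cmat R D) : Prop :=
  cmul B (@adjQ R D) = cmul (@adjQ R D) B /\
  forall x y : cube D, x != y -> ~~ adjacent x y -> B x y = 0.

Definition antisym (R : realType) (D : nat) (B : cmat R D) : Prop :=
  ctr B = (fun x y => - B x y).

Definition Bmat (R : realType) (D : nat) (i j : 'I_D) : cmat R D :=
  fun x y => cmul (cmul (@alpha_star R D i) (@adjQ R D)) (@alpha_star R D j) x y
           - cmul (cmul (@alpha_star R D j) (@adjQ R D)) (@alpha_star R D i) x y.

(* Main.v *)
Require Import Defs.
From mathcomp Require Import all_boot all_order all_algebra.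
From mathcomp Require Import reals.
From mathcomp Require boolp.
From mathcomp Require Import perm fingroup.
From mathcomp Require Import ring lra.
Set Implicit Arguments. Unset Strict Implicit. Unset Printing Implicit Defensive.
Import GRing.Theory Num.Theory.
Local Open Scope ring_scope.

Section S.
Variables (R : realType) (D : nat).
Implicit Types (x y z : cube D) (k l : 'I_D).

Definition flip k x : cube D := [ffun l => if l == k then ~~ x l else x l].
Definition sg k x : R := if x k then -1 else 1.

Lemma flipK k x : flip k (flip k x) = x.
Proof. apply/ffunP => l; rewrite !ffunE; case: (l == k) => //; exact: negbK. Qed.

Lemma eq_flip k y z : (y == flip k z) = (z == flip k y).
Proof.
apply/eqP/eqP => ->; by rewrite flipK.
Qed.

Lemma flip_neq k l x : k != l -> flip k x != flip l x.
Proof.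
move=> kl; apply/eqP => /ffunP/(_ k); rewrite !ffunE eqxx (negbTE kl).
by case: (x k).
Qed.

Lemma hdistC x y : hdist x y = hdist y x.
Proof. by rewrite /hdist; apply: eq_card => l; rewrite !inE eq_sym. Qed.

Lemma adjQC x y : adjQ R x y = adjQ R y x.
Proof. by rewrite /adjQ /adjacent hdistC. Qed.

Lemma adj_flip k x : adjacent x (flip k x).
Proof.
rewrite /adjacent /hdist (_ : [set _ | _] = [set k]) ?cards1 //.
apply/finset.setP => l; rewrite !inE ffunE; case: (l == k) => //; first by case: (x l).
by rewrite eqxx.
Qed.

Lemma adjP x z : adjacent x z -> exists k, z = flip k x.
Proof.
rewrite /adjacent /hdist => /cards1P [k Hk]; exists k.
apply/ffunP => l; rewrite ffunE.
move/finset.setP: Hk => /(_ l); rewrite !inE.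
case: (l == k) => H.
  by move: H; case: (x l); case: (z l).
by move: H; case: (x l); case: (z l).
Qed.

Lemma sg_flip k x : sg k (flip k x) = - sg k x.
Proof. by rewrite /sg ffunE eqxx; case: (x k); rewrite ?opprK. Qed.

Lemma sg_flipN k l x : l != k -> sg l (flip k x) = sg l x.
Proof. by move=> lk; rewrite /sg ffunE (negbTE lk). Qed.

Lemma adjQ_flip k x y : adjQ R (flip k x) y = adjQ R x (flip k y).
Proof.
rewrite /adjQ /adjacent /hdist; congr (if _ == _ then _ else _); apply: eq_card => l.
rewrite !inE !ffunE; case: (l == k) => //.
by case: (x l); case: (y l).
Qed.

Lemma sum_ind a (g : cube D -> R) :
  \sum_z (z == a)%:R * g z = g a.
Proof.
rewrite (bigD1 a) //= eqxx mul1r big1 ?addr0 // => z /negbTE ->.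
by rewrite mul0r.
Qed.

Lemma cmul_alpha_l k (M : cmat R D) x y :
  cmul (@alpha_star R D k) M x y = sg k x * M x y.
Proof.
rewrite /cmul (bigD1 x) //= /alpha_star eqxx big1 ?addr0 // => z /negbTE.
by rewrite eq_sym => ->; rewrite mul0r.
Qed.

Lemma cmul_alpha_r k (M : cmat R D) x y :
  cmul M (@alpha_star R D k) x y = M x y * sg k y.
Proof.
rewrite /cmul (bigD1 y) //= /alpha_star eqxx big1 ?addr0 // => z /negbTE.
by move=> ->; rewrite mulr0.
Qed.

Variables (i j : 'I_D).
Hypothesis ij : i != j.

Lemma Bmat_eq x y :
  @Bmat R D i j x y = adjQ R x y * (sg i x * sg j y - sg j x * sg i y).
Proof. rewrite /Bmat !cmul_alpha_r !cmul_alpha_l; ring. Qed.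

Lemma Bform x z : @Bmat R D i j x z =
  2 * (sg i x * sg j x) * ((z == flip i x)%:R - (z == flip j x)%:R).
Proof.
rewrite Bmat_eq; have [Ha|Hn] := boolP (adjacent x z).
  have [k ->] := adjP Ha.
  rewrite /adjQ adj_flip mul1r.
  have [ki|nki] := eqVneq k i.
    subst k; rewrite eqxx (negbTE (flip_neq x ij)) sg_flip sg_flipN 1?eq_sym //.
    rewrite /=; ring.
  have [kj|nkj] := eqVneq k j.
    subst k; rewrite eqxx (negbTE (flip_neq x nki)) sg_flip sg_flipN //.
    rewrite /=; ring.
  rewrite (negbTE (flip_neq x nki)) (negbTE (flip_neq x nkj)) !sg_flipN 1?eq_sym //.
  rewrite /=; ring.
rewrite /adjQ (negbTE Hn).
have -> : (z == flip i x) = false.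
  by apply/negbTE; move: (Hn); apply: contra => /eqP ->; apply: adj_flip.
have -> : (z == flip j x) = false.
  by apply/negbTE; move: (Hn); apply: contra => /eqP ->; apply: adj_flip.
rewrite /=; ring.
Qed.

Lemma hd_swap x y : (x i == y i) = (x j == y j) ->
  adjQ R x (flip i y) = adjQ R x (flip j y).
Proof.
move=> E; rewrite /adjQ /adjacent /hdist.
set t := tperm i j.
have -> : [set l | x l != flip j y l] = t @^-1: [set l | x l != flip i y l].
  apply/finset.setP => l; rewrite !inE !ffunE.
  have ij' : (i == j) = false by apply/negbTE.
  have ji' : (j == i) = false by rewrite eq_sym; apply/negbTE.
  rewrite /t; case: tpermP => [->|->|ni nj].
  - rewrite ?ij' ?ji' ?eqxx.
    by move: E; case: (x i); case: (y i); case: (x j); case: (y j).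
  - rewrite ?ij' ?ji' ?eqxx.
    by move: E; case: (x i); case: (y i); case: (x j); case: (y j).
  - have /negbTE -> : l != i by apply/eqP.
    by have /negbTE -> : l != j by apply/eqP.
by rewrite card_preimset //; apply: perm_inj.
Qed.

End S.

Theorem lemma9p5 (R : realType) (D : nat) (hD : (1 <= D)%N) (i j : 'I_D)
  (hij : (i < j)%N) :
  antisym (@Bmat R D i j) /\ A_like (@Bmat R D i j).
Proof.
have ij : i != j by apply/eqP => e; move: hij; rewrite e ltnn.
split.
  rewrite /antisym /ctr; apply/boolp.funext => x; apply/boolp.funext => y.
  rewrite !Bmat_eq adjQC; ring.
split; last first.
  by move=> x y _ Hn; rewrite Bmat_eq /adjQ (negbTE Hn) mul0r.
apply/boolp.funext => x; apply/boolp.funext => y; rewrite /cmul.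
under eq_bigr => z _ do rewrite (Bform R ij).
under [RHS]eq_bigr => z _ do rewrite (Bform R ij) eq_flip (eq_flip j).
transitivity (2 * (sg R i x * sg R j x) *
   (adjQ R (flip i x) y - adjQ R (flip j x) y)).
  pose g := fun z => 2 * (sg R i x * sg R j x) * adjQ R z y.
  transitivity (\sum_z ((z == flip i x)%:R * g z) - \sum_z ((z == flip j x)%:R * g z)).
    by rewrite -sumrB; apply: eq_bigr => z _; rewrite /g; ring.
  by rewrite !sum_ind /g; ring.
transitivity (adjQ R x (flip i y) * (2 * (sg R i (flip i y) * sg R j (flip i y)))
   - adjQ R x (flip j y) * (2 * (sg R i (flip j y) * sg R j (flip j y)))); last first.
  pose g := fun z => adjQ R x z * (2 * (sg R i z * sg R j z)).
  transitivity (\sum_z ((z == flip i y)%:R * g z) - \sum_z ((z == flip j y)%:R * g z)).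
    by rewrite !sum_ind.
  by rewrite -sumrB; apply: eq_bigr => z _; rewrite /g; ring.
have ji : j != i by rewrite eq_sym.
rewrite !adjQ_flip !sg_flip !sg_flipN //.
case E: ((x i == y i) == (x j == y j)).
  rewrite (hd_swap R ij (eqP E)); ring.
have -> : sg R i x * sg R j x = - (sg R i y * sg R j y).
  move: E; rewrite /sg.
  case: (x i); case: (y i); case: (x j); case: (y j) => //= _; ring.
ring.
Qed.
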